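(* If $g\in\mathcal{G}_0^0\cup\mathcal{G}_0^{sh}$, then for every finite measurable partition $\mathcal{P}$ the limit $\lim_{n\to\infty}\frac1nH(g,\mathcal{P}_n)$ exists and equals $h(g,\mathcal{P})$.
   Context: $\mathcal{G}_0$ is the set of concave functions $g:[0,1]\to\mathbb{R}$ with $g(0)=\lim_{x\to0^+}g(x)=0$. Let $\eta(x)=-x\log x$ and $\eta(0)=0$. Define $\mathcal{G}_0^0=\{g\in\mathcal{G}_0:\lim_{x\to0^+}g(x)/\eta(x)=0\}$ and $\mathcal{G}_0^{sh}=\{g\in\mathcal{G}_0:0<\lim_{x\to0^+}g(x)/\eta(x)<\infty\}$. $T$ is a measure-preserving map of a probability space $(X,\Sigma,\mu)$. For a finite measurable partition $\mathcal{P}$, let $\mathcal{P}_n=\bigvee_{i=0}^{n-1}T^{-i}\mathcal{P}$, $H(g,\mathcal{P})=\sum_{A\in\mathcal{P}}g(\mu(A))$, and $h(g,\mathcal{P})=\limsup_{n\to\infty}\frac1nH(g,\mathcal{P}_n)$. *)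

(* Defs.v *)
From Stdlib Require Import Reals List.
Import ListNotations.
Open Scope R_scope.

Definition set (X : Type) := X -> Prop.

Definition sigma_algebra {X : Type} (S : set X -> Prop) : Prop :=
  S (fun _ => True) /\
  (forall A, S A -> S (fun x => ~ A x)) /\
  (forall A : nat -> set X, (forall n, S (A n)) -> S (fun x => exists n, A n x)).

Definition pairwise_disjoint_seq {X : Type} (A : nat -> set X) : Prop :=
  forall i j x, i <> j -> A i x -> A j x -> False.

Definition probability_space {X : Type} (S : set X -> Prop) (mu : set X -> R) : Prop :=
  sigma_algebra S /\
  (forall A, S A -> 0 <= mu A) /\
  mu (fun _ => False) = 0 /\
  (forall A : nat -> set X, (forall n, S (A n)) -> pairwise_disjoint_seq A ->
     infinite_sum (fun n => mu (A n)) (mu (fun x => exists n, A n x))) /\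
  mu (fun _ => True) = 1.

Definition preimage {X : Type} (T : X -> X) (A : set X) : set X := fun x => A (T x).

Definition measure_preserving {X : Type} (S : set X -> Prop) (mu : set X -> R)
  (T : X -> X) : Prop :=
  forall A, S A -> S (preimage T A) /\ mu (preimage T A) = mu A.

Definition finite_measurable_partition {X : Type} (S : set X -> Prop)
  (P : list (set X)) : Prop :=
  (forall A, In A P -> S A) /\
  (forall i j x, (i < length P)%nat -> (j < length P)%nat -> i <> j ->
     nth i P (fun _ => False) x -> nth j P (fun _ => False) x -> False) /\
  (forall x, exists A, In A P /\ A x).

Definition refine {X : Type} (P Q : list (set X)) : list (set X) :=
  flat_map (fun A => map (fun B => fun x => A x /\ B x) Q) P.

Fixpoint iter_map {X : Type} (n : nat) (T : X -> X) : X -> X :=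
  match n with O => fun x => x | S k => fun x => T (iter_map k T x) end.

(** P_n = \/_{i=0}^{n-1} T^{-i} P  (P_0 is the trivial partition) *)
Fixpoint join_part {X : Type} (T : X -> X) (P : list (set X)) (n : nat) : list (set X) :=
  match n with
  | O => [fun _ => True]
  | S k => refine (join_part T P k) (map (preimage (iter_map k T)) P)
  end.

Definition Hg {X : Type} (mu : set X -> R) (g : R -> R) (P : list (set X)) : R :=
  fold_right Rplus 0 (map (fun A => g (mu A)) P).

Definition eta (x : R) : R := if Req_EM_T x 0 then 0 else - x * ln x.

Definition concave_on_01 (g : R -> R) : Prop :=
  forall x y t, 0 <= x <= 1 -> 0 <= y <= 1 -> 0 <= t <= 1 ->
    t * g x + (1 - t) * g y <= g (t * x + (1 - t) * y).

Definition G0 (g : R -> R) : Prop :=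
  concave_on_01 g /\ g 0 = 0 /\
  (forall eps, 0 < eps -> exists delta, 0 < delta /\
     forall x, 0 < x < delta -> Rabs (g x) < eps).

Definition ratio_limit_at_0 (g : R -> R) (l : R) : Prop :=
  forall eps, 0 < eps -> exists delta, 0 < delta /\
    forall x, 0 < x < delta -> x < 1 -> Rabs (g x / eta x - l) < eps.

Definition G0_0 (g : R -> R) : Prop := G0 g /\ ratio_limit_at_0 g 0.

Definition G0_sh (g : R -> R) : Prop :=
  G0 g /\ exists c, 0 < c /\ ratio_limit_at_0 g c.

Definition is_limsup (u : nat -> R) (l : R) : Prop :=
  forall eps, 0 < eps ->
    (exists N, forall n, (N <= n)%nat -> u n < l + eps) /\
    (forall N, exists n, (N <= n)%nat /\ l - eps < u n).

(* Main.v *)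
Require Import Defs.
From Stdlib Require Import Reals List Lra Lia FunctionalExtensionality PropExtensionality Classical.
Import ListNotations.
Open Scope R_scope.

Definition sumL {A : Type} (l : list A) (f : A -> R) : R := fold_right Rplus 0 (map f l).

Lemma sumL_nil {A} (f : A -> R) : sumL [] f = 0. Proof. reflexivity. Qed.
Lemma sumL_cons {A} a l (f : A -> R) : sumL (a :: l) f = f a + sumL l f.
Proof. reflexivity. Qed.
Lemma sumL_app {A} l1 l2 (f : A -> R) : sumL (l1 ++ l2) f = sumL l1 f + sumL l2 f.
Proof. induction l1; [rewrite sumL_nil; simpl; ring|]. simpl app. rewrite !sumL_cons, IHl1. ring. Qed.

Lemma sumL_ext {A} l (f h : A -> R) : (forall x, In x l -> f x = h x) -> sumL l f = sumL l h.
Proof. induction l; intros H; [reflexivity|]. rewrite !sumL_cons. rewrite H, IHl; auto.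
  intros; apply H; simpl; auto. simpl; auto. Qed.

Lemma sumL_le {A} l (f h : A -> R) : (forall x, In x l -> f x <= h x) -> sumL l f <= sumL l h.
Proof. induction l; intros H; [rewrite !sumL_nil; lra|]. rewrite !sumL_cons.
  assert (f a <= h a) by (apply H; simpl; auto).
  assert (sumL l f <= sumL l h) by (apply IHl; intros; apply H; simpl; auto). lra. Qed.

Lemma sumL_plus {A} l (f h : A -> R) : sumL l (fun x => f x + h x) = sumL l f + sumL l h.
Proof. induction l; [rewrite !sumL_nil; ring|]. rewrite !sumL_cons, IHl. ring. Qed.

Lemma sumL_scal {A} l (c : R) (f : A -> R) : sumL l (fun x => c * f x) = c * sumL l f.
Proof. induction l; [rewrite !sumL_nil; ring|]. rewrite !sumL_cons, IHl. ring. Qed.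

Lemma sumL_minus {A} l (f h : A -> R) : sumL l (fun x => f x - h x) = sumL l f - sumL l h.
Proof. induction l; [rewrite !sumL_nil; ring|]. rewrite !sumL_cons, IHl. ring. Qed.

Lemma sumL_swap {A B} (l1 : list A) (l2 : list B) (F : A -> B -> R) :
  sumL l1 (fun x => sumL l2 (fun y => F x y)) = sumL l2 (fun y => sumL l1 (fun x => F x y)).
Proof. induction l1; simpl.
  - rewrite sumL_nil. induction l2; [reflexivity|]. rewrite sumL_cons, <- IHl2, sumL_nil. ring.
  - rewrite sumL_cons, IHl1. rewrite <- sumL_plus. apply sumL_ext. intros. rewrite sumL_cons. ring. Qed.

Lemma sumL_nonneg {A} l (f : A -> R) : (forall x, In x l -> 0 <= f x) -> 0 <= sumL l f.
Proof. intros H. replace 0 with (sumL l (fun _ => 0)). apply sumL_le; auto.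
  induction l; [reflexivity|]. rewrite sumL_cons, IHl; [ring|]. intros; apply H; simpl; auto. Qed.

Lemma sumL_elem {A} l (f : A -> R) x : (forall y, In y l -> 0 <= f y) -> In x l -> f x <= sumL l f.
Proof. induction l; intros H Hx; [destruct Hx|]. rewrite sumL_cons. destruct Hx as [->|Hx].
  - assert (0 <= sumL l f) by (apply sumL_nonneg; intros; apply H; simpl; auto). lra.
  - assert (0 <= f a) by (apply H; simpl; auto).
    assert (f x <= sumL l f) by (apply IHl; auto; intros; apply H; simpl; auto). lra. Qed.

Lemma sumL_abs {A} l (f : A -> R) : Rabs (sumL l f) <= sumL l (fun x => Rabs (f x)).
Proof. induction l; [rewrite !sumL_nil, Rabs_R0; lra|]. rewrite !sumL_cons.
  eapply Rle_trans; [apply Rabs_triang|]. lra. Qed.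

Lemma eta_eq x : eta x = - x * ln x.
Proof. unfold eta. destruct (Req_EM_T x 0); [subst; ring | reflexivity]. Qed.

Lemma ln_le_m1 y : 0 < y -> ln y <= y - 1.
Proof. intros H. pose proof (exp_ineq1_le (ln y)). rewrite exp_ln in H0; lra. Qed.

Lemma gibbs_point q a b : 0 <= q -> q <= a -> q <= b ->
  - q * ln a - q * ln b + q * ln q >= q - a * b.
Proof. intros H0 Ha Hb. destruct (Req_dec q 0) as [->|Hq].
  - assert (0 <= a * b) by (apply Rmult_le_pos; lra). lra.
  - assert (Q0 : 0 < q) by lra. assert (A0 : 0 < a) by lra. assert (B0 : 0 < b) by lra.
    assert (Z : 0 < a * b * / q) by (apply Rdiv_lt_0_compat; [apply Rmult_lt_0_compat|]; lra).
    pose proof (ln_le_m1 _ Z) as L.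
    assert (ln (a * b * / q) = ln a + ln b - ln q) as E.
    { rewrite ln_mult, ln_mult, ln_Rinv; try lra. apply Rmult_lt_0_compat; lra.
      apply Rinv_0_lt_compat; lra. }
    rewrite E in L.
    apply Rmult_le_compat_l with (r := q) in L; [|lra].
    replace (q * (a * b * / q - 1)) with (a*b - q) in L by (field; lra). nra. Qed.

Lemma gibbs {A B : Type} (Q : list A) (R0 : list B) (q : A -> B -> R) (a : A -> R) (b : B -> R) :
  (forall x y, In x Q -> In y R0 -> 0 <= q x y) ->
  (forall x, In x Q -> sumL R0 (q x) = a x) ->
  (forall y, In y R0 -> sumL Q (fun x => q x y) = b y) ->
  sumL Q a = 1 -> sumL R0 b = 1 ->
  sumL Q (fun x => sumL R0 (fun y => eta (q x y))) <=
  sumL Q (fun x => eta (a x)) + sumL R0 (fun y => eta (b y)).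
Proof. intros Hpos Ha Hb Sa Sb.
  assert (E1 : sumL Q (fun x => eta (a x)) = sumL Q (fun x => sumL R0 (fun y => - q x y * ln (a x)))).
  { apply sumL_ext; intros x Hx. rewrite eta_eq.
    rewrite (sumL_ext _ _ (fun y => (- ln (a x)) * q x y)) by (intros; ring).
    rewrite sumL_scal. change (sumL R0 (fun y => q x y)) with (sumL R0 (q x)). rewrite Ha; auto. ring. }
  assert (E2 : sumL R0 (fun y => eta (b y)) = sumL Q (fun x => sumL R0 (fun y => - q x y * ln (b y)))).
  { rewrite sumL_swap. apply sumL_ext; intros y Hy. rewrite eta_eq.
    rewrite (sumL_ext _ _ (fun x => (- ln (b y)) * q x y)) by (intros; ring).
    rewrite sumL_scal. rewrite Hb; auto. ring. }
  rewrite E1, E2, <- sumL_plus.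
  assert (D : sumL Q (fun x => sumL R0 (fun y => q x y - a x * b y)) = 0).
  { rewrite (sumL_ext _ _ (fun x => a x - 1 * a x)). rewrite sumL_minus, sumL_scal. rewrite Sa; ring.
    intros x Hx. rewrite sumL_minus, sumL_scal, Sb. change (sumL R0 (fun y => q x y)) with (sumL R0 (q x)). rewrite Ha; auto. ring. }
  assert (sumL Q (fun x => sumL R0 (fun y => q x y - a x * b y)) <=
          sumL Q (fun x => sumL R0 (fun y => - q x y * ln (a x) - q x y * ln (b y) + q x y * ln (q x y)))).
  { apply sumL_le; intros x Hx. apply sumL_le; intros y Hy.
    apply Rge_le. apply gibbs_point. auto.
    rewrite <- Ha by auto. apply (sumL_elem R0 (q x) y); auto.
    rewrite <- Hb by auto. apply (sumL_elem Q (fun x => q x y) x); auto. }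
  rewrite D in H.
  assert (sumL Q (fun x => sumL R0 (fun y => eta (q x y))) - sumL Q (fun x => sumL R0 (fun y => - q x y * ln (a x)) + sumL R0 (fun y => - q x y * ln (b y))) =
   - sumL Q (fun x => sumL R0 (fun y => - q x y * ln (a x) - q x y * ln (b y) + q x y * ln (q x y)))).
  { assert (forall F1 F2 F3 : A -> R, sumL Q F1 - sumL Q F2 + sumL Q F3 = sumL Q (fun x => F1 x - F2 x + F3 x)) as K.
    { intros. rewrite sumL_plus, sumL_minus. ring. }
    enough (sumL Q (fun x => sumL R0 (fun y => eta (q x y))) - sumL Q (fun x => sumL R0 (fun y => - q x y * ln (a x)) + sumL R0 (fun y => - q x y * ln (b y))) +
   sumL Q (fun x => sumL R0 (fun y => - q x y * ln (a x) - q x y * ln (b y) + q x y * ln (q x y))) = 0) by lra.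
    rewrite K. replace 0 with (sumL Q (fun _ => 0)).
    apply sumL_ext; intros x Hx. rewrite <- !sumL_plus, <- sumL_minus, <- sumL_plus.
    replace 0 with (sumL R0 (fun _ => 0)).
    apply sumL_ext; intros y Hy. rewrite eta_eq. ring.
    clear. induction R0; [reflexivity|]. rewrite sumL_cons, IHR0; ring.
    clear. induction Q; [reflexivity|]. rewrite sumL_cons, IHQ; ring. }
  lra.
Qed.

Lemma set_ext {X} (A B : set X) : (forall x, A x <-> B x) -> A = B.
Proof. intros H. apply functional_extensionality; intros x. apply propositional_extensionality; auto. Qed.

Definition I {X} (A B : set X) : set X := fun x => A x /\ B x.

Lemma meas_compl {X} S (mu : set X -> R) A : probability_space S mu -> S A -> S (fun x => ~ A x).
Proof. intros [[_ [H _]] _]; auto. Qed.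

Lemma meas_True {X} S (mu : set X -> R) : probability_space S mu -> S (fun _ => True).
Proof. intros [[H _] _]; auto. Qed.

Lemma meas_False {X} S (mu : set X -> R) : probability_space S mu -> S (fun _ => False).
Proof. intros HP. replace (fun _ : X => False) with (fun x : X => ~ True).
  apply (meas_compl S mu); auto. eapply meas_True; eauto. apply set_ext; tauto. Qed.

Definition two {X} (A B : set X) (n : nat) : set X :=
  match n with O => A | 1%nat => B | _ => fun _ => False end.

Lemma meas_union {X} S (mu : set X -> R) A B : probability_space S mu -> S A -> S B ->
  S (fun x => A x \/ B x).
Proof. intros HP HA HB. replace (fun x => A x \/ B x) with (fun x => exists n, two A B n x).
  - pose proof HP as [[_ [_ H]] _]. apply H. intros [|[|n]]; simpl; auto. eapply meas_False; eauto.
  - apply set_ext; intros x; split.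
    + intros [[|[|n]] H]; simpl in H; tauto.
    + intros [H|H]; [exists 0%nat | exists 1%nat]; exact H. Qed.

Lemma meas_inter {X} S (mu : set X -> R) A B : probability_space S mu -> S A -> S B -> S (I A B).
Proof. intros HP HA HB. replace (I A B) with (fun x => ~ ((fun y => ~ A y \/ ~ B y) x)).
  apply (meas_compl S mu); auto. apply (meas_union S mu); auto; apply (meas_compl S mu); auto.
  apply set_ext; intros x; unfold I. split.
  - intros H. split; apply NNPP; tauto.
  - tauto. Qed.

Lemma mu_nonneg {X} S (mu : set X -> R) A : probability_space S mu -> S A -> 0 <= mu A.
Proof. intros [_ [H _]]; auto. Qed.

Lemma mu_add {X} S (mu : set X -> R) A B : probability_space S mu -> S A -> S B ->
  (forall x, A x -> B x -> False) -> mu (fun x => A x \/ B x) = mu A + mu B.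
Proof. intros HP HA HB D. pose proof HP as [Hs [_ [H0 [Hadd _]]]].
  assert (Hsum : infinite_sum (fun n => mu (two A B n)) (mu (fun x => exists n, two A B n x))).
  { apply Hadd. intros [|[|n]]; simpl; auto. eapply meas_False; eauto.
    intros [|[|i]] [|[|j]] x Hij; simpl; try tauto; try congruence; intros; eauto. }
  replace (fun x => A x \/ B x) with (fun x => exists n, two A B n x).
  - eapply uniqueness_sum; [exact Hsum|]. intros eps Heps. exists 1%nat. intros n Hn.
    assert (sum_f_R0 (fun n => mu (two A B n)) n = mu A + mu B).
    { induction n; [lia|]. destruct n; simpl. reflexivity.
      simpl in IHn. rewrite IHn by lia. rewrite H0. ring. }
    rewrite H. unfold Rdist. rewrite Rminus_diag, Rabs_R0. lra.
  - apply set_ext; intros x; split.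
    + intros [[|[|n]] H]; simpl in H; tauto.
    + intros [H|H]; [exists 0%nat | exists 1%nat]; exact H. Qed.

Lemma mu_le1 {X} S (mu : set X -> R) A : probability_space S mu -> S A -> mu A <= 1.
Proof. intros HP HA. pose proof (mu_add S mu A (fun x => ~ A x) HP HA (meas_compl S mu A HP HA)) as H.
  assert (E : (fun x => A x \/ ~ A x) = (fun _ : X => True)) by (apply set_ext; intros; tauto).
  specialize (H (fun x a b => b a)). cbv beta in H.
  rewrite E in H. pose proof HP as [_ [Hn [_ [_ H1]]]]. rewrite H1 in H.
  assert (0 <= mu (fun x => ~ A x)) by (apply Hn; apply (meas_compl S mu); auto).
  lra. Qed.

Definition Ul {X} (L : list (set X)) : set X := fun x => exists B, In B L /\ B x.

Lemma meas_Ul {X} S (mu : set X -> R) L : probability_space S mu ->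
  (forall B, In B L -> S B) -> S (Ul L).
Proof. intros HP. induction L; intros HL.
  - replace (Ul []) with (fun _ : X => False). eapply meas_False; eauto.
    apply set_ext; intros x; unfold Ul; simpl; split; [tauto| intros [B [[] _]]].
  - replace (Ul (a :: L)) with (fun x => a x \/ Ul L x).
    apply (meas_union S mu); auto. apply HL; simpl; auto. apply IHL; intros; apply HL; simpl; auto.
    apply set_ext; intros x; unfold Ul; simpl; split.
    + intros [H|[B [H1 H2]]]; eauto.
    + intros [B [[<-|H1] H2]]; eauto. Qed.

Definition idisj {X} (L : list (set X)) : Prop :=
  forall i j x, (i < length L)%nat -> (j < length L)%nat -> i <> j ->
     nth i L (fun _ => False) x -> nth j L (fun _ => False) x -> False.

Lemma sum_idisj {X} S (mu : set X -> R) L : probability_space S mu ->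
  (forall B, In B L -> S B) -> idisj L ->
  forall A, S A -> sumL L (fun B => mu (I A B)) = mu (I A (Ul L)).
Proof. intros HP. induction L; intros HL HD A HA.
  - rewrite sumL_nil. replace (I A (Ul [])) with (fun _ : X => False).
    destruct HP as [_ [_ [H _]]]; auto.
    apply set_ext; intros x; unfold I, Ul; simpl; split; [tauto| intros [_ [B [[] _]]]].
  - rewrite sumL_cons. rewrite IHL; auto.
    2: intros; apply HL; simpl; auto.
    2: { unfold idisj in *. intros i j x Hi Hj Hij. apply (HD (Datatypes.S i) (Datatypes.S j) x); simpl; lia. }
    replace (I A (Ul (a :: L))) with (fun x => I A a x \/ I A (Ul L) x).
    rewrite (mu_add S mu); auto.
    + apply (meas_inter S mu); auto. apply HL; simpl; auto.
    + apply (meas_inter S mu); auto. apply (meas_Ul S mu); auto. intros; apply HL; simpl; auto.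
    + intros x [_ H1] [_ [B [HB H2]]]. destruct (In_nth L B (fun _ => False) HB) as [j [Hj E]].
      unfold idisj in HD. apply (HD 0%nat (Datatypes.S j) x); simpl; try lia. auto. rewrite E; auto.
    + apply set_ext; intros x; unfold I, Ul; simpl; split.
      * intros [[H1 H2]|[H1 [B [H2 H3]]]]; eauto.
      * intros [H1 [B [[<-|H2] H3]]]; eauto. Qed.

Definition good {X} S (mu : set X -> R) (Q : list (set X)) : Prop :=
  (forall B, In B Q -> S B) /\ forall A, S A -> sumL Q (fun B => mu (I A B)) = mu A.

Lemma fmp_good {X} S (mu : set X -> R) P : probability_space S mu ->
  finite_measurable_partition S P -> good S mu P.
Proof. intros HP [HM [HD HC]]. split; auto. intros A HA.
  rewrite (sum_idisj S mu); auto. f_equal. apply set_ext; intros x; unfold I, Ul; split; [tauto|].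
  intros; split; auto. Qed.

Lemma fmp_pre {X} S (mu : set X -> R) P (f : X -> X) :
  (forall A, S A -> S (preimage f A)) ->
  finite_measurable_partition S P -> finite_measurable_partition S (map (preimage f) P).
Proof. intros Hf [HM [HD HC]]. split; [|split].
  - intros A HA. apply in_map_iff in HA. destruct HA as [B [<- HB]]. auto.
  - intros i j x Hi Hj Hij. rewrite length_map in Hi, Hj.
    change (fun _ : X => False) with (@preimage X f (fun _ : X => False)).
    rewrite !map_nth. unfold preimage. apply (HD i j (f x)); auto.
  - intros x. destruct (HC (f x)) as [A [HA HAx]]. exists (preimage f A). split; auto.
    apply in_map; auto. Qed.

Lemma iter_meas {X} S (mu : set X -> R) T : measure_preserving S mu T ->
  forall k A, S A -> S (preimage (iter_map k T) A) /\ mu (preimage (iter_map k T) A) = mu A.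
Proof. intros HT k. induction k; intros A HA.
  - simpl. unfold preimage. split; auto.
  - change (preimage (iter_map (Datatypes.S k) T) A) with (preimage (iter_map k T) (preimage T A)).
    destruct (HT A HA) as [H1 H2]. destruct (IHk _ H1) as [H3 H4]. split; auto. congruence. Qed.

Lemma sumL_map {A B} (h : A -> B) l (F : B -> R) : sumL (map h l) F = sumL l (fun x => F (h x)).
Proof. unfold sumL. rewrite map_map. reflexivity. Qed.

Lemma sumL_refine {X} (Q R0 : list (set X)) F :
  sumL (refine Q R0) F = sumL Q (fun A => sumL R0 (fun B => F (I A B))).
Proof. unfold refine. induction Q; [reflexivity|]. simpl flat_map. rewrite sumL_app, sumL_cons, IHQ.
  rewrite sumL_map. reflexivity. Qed.

Lemma good_True {X} S (mu : set X -> R) : probability_space S mu -> good S mu [fun _ => True].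
Proof. intros HP. split.
  - intros B [<-|[]]. eapply meas_True; eauto.
  - intros A HA. rewrite sumL_cons, sumL_nil. replace (I A (fun _ => True)) with A. ring.
    apply set_ext; unfold I; tauto. Qed.

Lemma good_refine {X} S (mu : set X -> R) Q R0 : probability_space S mu ->
  good S mu Q -> good S mu R0 -> good S mu (refine Q R0).
Proof. intros HP [HQ1 HQ2] [HR1 HR2]. split.
  - intros B HB. unfold refine in HB. apply in_flat_map in HB. destruct HB as [A [HA HB]].
    apply in_map_iff in HB. destruct HB as [C [<- HC]]. apply (meas_inter S mu); auto.
  - intros A HA. rewrite sumL_refine. rewrite <- HQ2 by auto. apply sumL_ext; intros B HB.
    rewrite <- HR2 by (apply (meas_inter S mu); auto). apply sumL_ext; intros C HC.
    f_equal. apply set_ext; unfold I; tauto. Qed.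

Lemma map_pre_refine {X} (f : X -> X) Q R0 :
  map (preimage f) (refine Q R0) = refine (map (preimage f) Q) (map (preimage f) R0).
Proof. unfold refine. induction Q; [reflexivity|]. simpl flat_map. rewrite map_app.
  simpl map at 2. simpl flat_map. f_equal; [rewrite !map_map; reflexivity | exact IHQ]. Qed.

Lemma refine_assoc {X} (Q R0 U : list (set X)) :
  refine (refine Q R0) U = refine Q (refine R0 U).
Proof. unfold refine. induction Q; [reflexivity|]. simpl. rewrite flat_map_app, IHQ. f_equal.
  clear IHQ. induction R0; [reflexivity|]. simpl. rewrite map_app, IHR0. f_equal.
  rewrite map_map. apply map_ext; intros C. apply set_ext; intros; tauto. Qed.

Lemma refine_True {X} (Q : list (set X)) : refine Q [fun _ => True] = Q.
Proof. unfold refine. induction Q; [reflexivity|]. simpl. f_equal; [|exact IHQ].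
  apply set_ext; intros; tauto. Qed.

Lemma iter_comp {X} (T : X -> X) m n x : iter_map n T (iter_map m T x) = iter_map (n + m) T x.
Proof. induction n; simpl; congruence. Qed.

Lemma join_add {X} (T : X -> X) P m n :
  join_part T P (m + n) = refine (join_part T P m) (map (preimage (iter_map m T)) (join_part T P n)).
Proof. induction n.
  - rewrite Nat.add_0_r. symmetry. apply refine_True.
  - rewrite Nat.add_succ_r. simpl join_part. rewrite IHn, map_pre_refine, refine_assoc.
    f_equal. f_equal. rewrite map_map. apply map_ext; intros B. unfold preimage.
    apply set_ext; intros x. rewrite iter_comp, Nat.add_comm. tauto. Qed.

Lemma good_join {X} S (mu : set X -> R) T P : probability_space S mu -> measure_preserving S mu T ->
  finite_measurable_partition S P ->
  forall n m, good S mu (map (preimage (iter_map m T)) (join_part T P n)).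
Proof. intros HP HT HF n. induction n; intros m.
  - simpl. apply good_True; auto.
  - simpl join_part. rewrite map_pre_refine. apply good_refine; auto.
    apply fmp_good; auto. apply (fmp_pre S mu). intros A0 HA0; exact (proj1 (iter_meas S mu T HT _ A0 HA0)).
    apply (fmp_pre S mu); auto. intros A0 HA0; exact (proj1 (iter_meas S mu T HT _ A0 HA0)). Qed.

Lemma map_pre0 {X} (T : X -> X) (L : list (set X)) : map (preimage (iter_map 0 T)) L = L.
Proof. induction L; [reflexivity|]. simpl. f_equal. exact IHL. Qed.

Lemma good_sum1 {X} S (mu : set X -> R) Q : probability_space S mu -> good S mu Q -> sumL Q mu = 1.
Proof. intros HP [H1 H2]. pose proof (H2 _ (meas_True S mu HP)) as E.
  pose proof HP as [_ [_ [_ [_ E1]]]]. rewrite E1 in E. rewrite <- E. apply sumL_ext; intros B HB.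
  f_equal. apply set_ext; unfold I; tauto. Qed.

Lemma good_join0 {X} S (mu : set X -> R) T P : probability_space S mu -> measure_preserving S mu T ->
  finite_measurable_partition S P -> forall n, good S mu (join_part T P n).
Proof. intros. rewrite <- (map_pre0 T). apply good_join; auto. Qed.

Lemma eta_nonneg x : 0 <= x <= 1 -> 0 <= eta x.
Proof. intros H. rewrite eta_eq. destruct (Req_dec x 0) as [->|Hx]; [lra|].
  destruct (Req_dec x 1) as [->|Hx1]; [rewrite ln_1; lra|].
  assert (ln x < 0). { rewrite <- ln_1. apply ln_increasing; lra. } nra. Qed.

Lemma eta_le1 x : 0 <= x <= 1 -> eta x <= 1.
Proof. intros H. rewrite eta_eq. destruct (Req_dec x 0) as [->|Hx]; [lra|].
  assert (0 < /x) by (apply Rinv_0_lt_compat; lra).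
  pose proof (ln_le_m1 _ H0). rewrite ln_Rinv in H1 by lra.
  assert (x * - ln x <= x * (/ x - 1)) by (apply Rmult_le_compat_l; lra).
  replace (x * (/x - 1)) with (1 - x) in H2 by (field; lra). lra. Qed.

Lemma eta_pos x : 0 < x < 1 -> 0 < eta x.
Proof. intros H. rewrite eta_eq. assert (ln x < 0). { rewrite <- ln_1. apply ln_increasing; lra. } nra. Qed.

Lemma good_mu01 {X} S (mu : set X -> R) Q : probability_space S mu -> good S mu Q ->
  forall B, In B Q -> 0 <= mu B <= 1.
Proof. intros HP [H1 _] B HB. split; [apply (mu_nonneg S mu)|apply (mu_le1 S mu)]; auto. Qed.

Lemma ent_subadd {X} S (mu : set X -> R) T P : probability_space S mu -> measure_preserving S mu T ->
  finite_measurable_partition S P -> forall m n,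
  Hg mu eta (join_part T P (m + n)) <= Hg mu eta (join_part T P m) + Hg mu eta (join_part T P n).
Proof. intros HP HT HF m n. rewrite join_add.
  pose proof (good_join0 S mu T P HP HT HF m) as Gm.
  pose proof (good_join S mu T P HP HT HF n m) as Gn.
  pose proof (good_join0 S mu T P HP HT HF n) as Gn0.
  unfold Hg. change (fold_right Rplus 0 (map ?f ?l)) with (sumL l f).
  rewrite sumL_refine.
  replace (sumL (join_part T P n) (fun A => eta (mu A))) with
    (sumL (map (preimage (iter_map m T)) (join_part T P n)) (fun A => eta (mu A))).
  2: { rewrite sumL_map. apply sumL_ext; intros B HB. f_equal.
       apply (iter_meas S mu T HT). destruct Gn0 as [G _]; auto. }
  apply (gibbs _ _ (fun A B => mu (I A B)) mu mu).
  - intros A B HA HB. apply (mu_nonneg S mu); auto. apply (meas_inter S mu); auto.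
    destruct Gm as [G _]; auto. destruct Gn as [G _]; auto.
  - intros A HA. destruct Gn as [_ G]. apply G. destruct Gm as [G' _]; auto.
  - intros B HB. destruct Gm as [_ G]. rewrite <- G. apply sumL_ext; intros. f_equal.
    apply set_ext; unfold I; tauto. destruct Gn as [G' _]; auto.
  - apply (good_sum1 S mu); auto.
  - apply (good_sum1 S mu); auto.
Qed.

Lemma sum_bound (a : nat -> R) m r : (forall n, 0 <= a n) -> (r <= m)%nat -> a r <= sum_f_R0 a m.
Proof. intros H Hr. induction m.
  - assert (r = 0%nat) by lia. subst. simpl. lra.
  - destruct (Nat.eq_dec r (Datatypes.S m)) as [->|Hne].
    + simpl. pose proof (cond_pos_sum a m H). lra.
    + simpl. specialize (H (Datatypes.S m)). assert (a r <= sum_f_R0 a m) by (apply IHm; lia). lra.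
Qed.

Lemma fekete (a : nat -> R) : (forall n, 0 <= a n) -> (forall m n, a (m + n)%nat <= a m + a n) ->
  exists L, Un_cv (fun n => a n / INR n) L.
Proof. intros Hpos Hsub.
  set (E := fun y => exists n, (1 <= n)%nat /\ y = - (a n / INR n)).
  assert (Hnn : forall n, (1 <= n)%nat -> 0 <= a n / INR n).
  { intros n Hn. unfold Rdiv. apply Rmult_le_pos; auto. left; apply Rinv_0_lt_compat, lt_0_INR; lia. }
  assert (HB : bound E). { exists 0. intros y [n [Hn ->]]. specialize (Hnn n Hn). lra. }
  assert (HE : exists y, E y). { exists (- (a 1%nat / INR 1)). exists 1%nat; split; auto. }
  destruct (completeness E HB HE) as [M [HM1 HM2]].
  exists (- M). intros eps Heps.
  assert (Hlow : forall n, (1 <= n)%nat -> - M <= a n / INR n).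
  { intros n Hn. assert (- (a n / INR n) <= M) by (apply HM1; exists n; auto). lra. }
  assert (Hm : exists m, (1 <= m)%nat /\ a m / INR m < - M + eps / 2).
  { apply NNPP; intros Hc. assert (M <= M - eps / 2); [|lra].
    apply HM2. intros y [n [Hn ->]]. destruct (Rlt_le_dec (a n / INR n) (- M + eps / 2)).
    exfalso; apply Hc; exists n; auto. lra. }
  destruct Hm as [m [Hm1 Hm2]].
  set (C := sum_f_R0 a m).
  assert (HC0 : 0 <= C) by (apply cond_pos_sum; auto).
  assert (Hq : forall q r, a (q * m + r)%nat <= INR q * a m + a r).
  { induction q; intros r. simpl. lra.
    replace (Datatypes.S q * m + r)%nat with (m + (q * m + r))%nat by lia.
    rewrite S_INR. specialize (IHq r). specialize (Hsub m (q * m + r)%nat). lra. }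
  destruct (archimed_cor1 (eps / (2 * (C + 1)))) as [N [HN1 HN2]].
  { apply Rdiv_lt_0_compat; lra. }
  exists N. intros n Hn. unfold Rdist.
  assert (Hn1 : (1 <= n)%nat) by lia.
  assert (HnR : 0 < INR n) by (apply lt_0_INR; lia).
  assert (HmR : 0 < INR m) by (apply lt_0_INR; lia).
  pose proof (Hlow n Hn1) as L1.
  assert (Hup : a n / INR n < - M + eps).
  { assert (Hdm : n = (n / m * m + n mod m)%nat).
    { rewrite (Nat.div_mod n m) at 1 by lia. lia. }
    set (q := (n / m)%nat) in *. set (r := (n mod m)%nat) in *.
    assert (Hr : (r < m)%nat) by (apply Nat.mod_upper_bound; lia).
    assert (Hqm : INR q * INR m <= INR n).
    { rewrite <- mult_INR. apply le_INR. lia. }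
    assert (A1 : a n <= INR q * a m + C).
    { rewrite Hdm. eapply Rle_trans; [apply Hq|]. pose proof (sum_bound a m r Hpos). 
      assert (a r <= C) by (apply H; lia). lra. }
    assert (A2 : INR q * a m <= INR n * (a m / INR m)).
    { apply Rmult_le_reg_r with (r := INR m); auto.
      replace (INR n * (a m / INR m) * INR m) with (INR n * a m) by (field; lra).
      replace (INR q * a m * INR m) with (INR q * INR m * a m) by ring.
      apply Rmult_le_compat_r; auto. }
    assert (A3 : C / INR n <= C * / INR N).
    { unfold Rdiv. apply Rmult_le_compat_l; auto. apply Rinv_le_contravar.
      apply lt_0_INR; lia. apply le_INR; lia. }
    assert (A4 : C * / INR N <= C * (eps / (2 * (C + 1)))).
    { apply Rmult_le_compat_l; auto. lra. }
    assert (A5 : C * (eps / (2 * (C + 1))) < eps / 2).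
    { replace (C * (eps / (2 * (C + 1)))) with ((eps / 2) * (C / (C + 1))) by (field; lra).
      assert (C / (C + 1) < 1). { apply Rmult_lt_reg_r with (r := C + 1); [lra|].
        replace (C / (C + 1) * (C + 1)) with C by (field; lra). lra. }
      nra. }
    assert (a n / INR n <= a m / INR m + C / INR n).
    { apply Rmult_le_reg_r with (r := INR n); auto.
      replace (a n / INR n * INR n) with (a n) by (field; lra).
      replace ((a m / INR m + C / INR n) * INR n) with (INR n * (a m / INR m) + C) by (field; lra).
      lra. }
    lra. }
  rewrite Rabs_right; lra.
Qed.

Lemma Rdiv_le_0_compat' a b : 0 <= a -> 0 < b -> 0 <= a / b.
Proof. intros. unfold Rdiv. apply Rmult_le_pos; auto. left; apply Rinv_0_lt_compat; auto. Qed.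

Lemma g_bound g : G0 g -> exists Mg, 0 <= Mg /\ forall x, 0 <= x <= 1 -> Rabs (g x) <= Mg.
Proof. intros [Hc [H0 _]]. exists (2 * Rabs (g (/2)) + Rabs (g 1)). split.
  pose proof (Rabs_pos (g (/2))); pose proof (Rabs_pos (g 1)); lra.
  intros x Hx.
  assert (L : x * g 1 + (1 - x) * g 0 <= g (x * 1 + (1 - x) * 0)) by (apply Hc; lra).
  replace (x * 1 + (1 - x) * 0) with x in L by ring. rewrite H0 in L.
  assert (U : /2 * g x + (1 - /2) * g (1 - x) <= g (/2 * x + (1 - /2) * (1 - x))) by (apply Hc; lra).
  replace (/2 * x + (1 - /2) * (1 - x)) with (/2) in U by field.
  assert (L2 : (1 - x) * g 1 + (1 - (1 - x)) * g 0 <= g ((1 - x) * 1 + (1 - (1 - x)) * 0)) by (apply Hc; lra).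
  replace ((1 - x) * 1 + (1 - (1 - x)) * 0) with (1 - x) in L2 by ring. rewrite H0 in L2.
  pose proof (Rle_abs (g (/2))) as Q1. pose proof (Rabs_pos (g (/2))) as Q2.
  pose proof (Rle_abs (g 1)) as Q3. pose proof (Rle_abs (- g 1)) as Q4. rewrite Rabs_Ropp in Q4.
  assert (x * g 1 >= - Rabs (g 1)) by (destruct (Rle_dec 0 (g 1)); nra).
  assert ((1 - x) * g 1 >= - Rabs (g 1)) by (destruct (Rle_dec 0 (g 1)); nra).
  apply Rabs_le. lra. Qed.

Lemma f_bound g c : G0 g -> ratio_limit_at_0 g c -> forall eps, 0 < eps ->
  exists K, 0 <= K /\ forall x, 0 <= x <= 1 -> Rabs (g x - c * eta x) <= eps * eta x + K * x.
Proof. intros HG Hr eps Heps. destruct (g_bound g HG) as [Mg [HMg0 HMg]].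
  destruct (Hr eps Heps) as [d [Hd Hd2]].
  set (d' := Rmin d 1). assert (Hd' : 0 < d') by (apply Rmin_pos; lra).
  assert (Hd'1 : d' <= 1) by apply Rmin_r. assert (Hd'd : d' <= d) by apply Rmin_l.
  exists ((Mg + Rabs c) / d'). split. { apply Rdiv_le_0_compat'; [pose proof (Rabs_pos c)|]; lra. }
  intros x Hx. destruct HG as [_ [G0 _]].
  assert (Eta0 : 0 <= eta x) by (apply eta_nonneg; auto).
  assert (KX : 0 <= (Mg + Rabs c) / d' * x).
  { apply Rmult_le_pos; [apply Rdiv_le_0_compat'; [pose proof (Rabs_pos c)|]; lra | lra]. }
  destruct (Req_dec x 0) as [->|Hx0].
  - rewrite G0, eta_eq. replace (0 - c * (- 0 * ln 0)) with 0 by ring. rewrite Rabs_R0. lra.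
  - destruct (Rlt_le_dec x d') as [Hlt|Hge].
    + assert (Ep : 0 < eta x) by (apply eta_pos; lra).
      specialize (Hd2 x ltac:(lra) ltac:(lra)).
      replace (g x - c * eta x) with ((g x / eta x - c) * eta x) by (field; lra).
      rewrite Rabs_mult, (Rabs_right (eta x)) by lra.
      assert (Rabs (g x / eta x - c) * eta x <= eps * eta x) by (apply Rmult_le_compat_r; lra). lra.
    + assert (Rabs (g x - c * eta x) <= Mg + Rabs c).
      { eapply Rle_trans; [apply Rabs_triang|]. rewrite Rabs_Ropp, Rabs_mult.
        pose proof (HMg x Hx). rewrite (Rabs_right (eta x)) by lra.
        pose proof (eta_le1 x Hx). pose proof (Rabs_pos c).
        assert (Rabs c * eta x <= Rabs c) by nra. lra. }
      assert (Mg + Rabs c <= (Mg + Rabs c) / d' * x).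
      { replace ((Mg + Rabs c) / d' * x) with ((Mg + Rabs c) * (x / d')) by (field; lra).
        assert (1 <= x / d'). { apply Rmult_le_reg_r with (r := d'); auto.
          replace (x / d' * d') with x by (field; lra). lra. }
        pose proof (Rabs_pos c). nra. }
      pose proof (Rmult_le_pos eps (eta x) ltac:(lra) Eta0). lra. Qed.

Lemma cv_limsup u l : Un_cv u l -> is_limsup u l.
Proof. intros H eps Heps. destruct (H eps Heps) as [N HN]. split.
  - exists N. intros n Hn. specialize (HN n Hn). unfold Rdist in HN. apply Rabs_def2 in HN. lra.
  - intros N'. exists (max N N'). split; [lia|]. specialize (HN (max N N') ltac:(lia)).
    unfold Rdist in HN. apply Rabs_def2 in HN. lra. Qed.

Theorem mainTheorem6 (X : Type) (S : set X -> Prop) (mu : set X -> R) (T : X -> X)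
  (g : R -> R) (P : list (set X)) :
  probability_space S mu ->
  measure_preserving S mu T ->
  (G0_0 g \/ G0_sh g) ->
  finite_measurable_partition S P ->
  exists h : R,
    is_limsup (fun n => Hg mu g (join_part T P n) / INR n) h /\
    Un_cv (fun n => Hg mu g (join_part T P n) / INR n) h.
Proof. intros HP HT Hg0 HF.
  assert (HG : G0 g /\ exists c, ratio_limit_at_0 g c).
  { destruct Hg0 as [[H1 H2]|[H1 [c [_ H2]]]]; split; eauto. }
  destruct HG as [HG [c Hc]].
  set (a := fun n => Hg mu eta (join_part T P n)).
  assert (Ga : forall n, good S mu (join_part T P n)) by (apply good_join0; auto).
  assert (Hapos : forall n, 0 <= a n).
  { intros n. unfold a, Hg. change (fold_right Rplus 0 (map ?f ?l)) with (sumL l f).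
    apply sumL_nonneg. intros B HB. apply eta_nonneg. apply (good_mu01 S mu (join_part T P n)); auto. }
  assert (Hasub : forall m n, a (m + n)%nat <= a m + a n) by (intros; apply (ent_subadd S mu); auto).
  destruct (fekete a Hapos Hasub) as [L HL].
  assert (Halin : forall n, a n <= INR n * a 1%nat).
  { induction n. simpl INR. unfold a, Hg; simpl. pose proof HP as [_ [_ [_ [_ E1]]]]. rewrite E1, eta_eq, ln_1. lra.
    rewrite S_INR. specialize (Hasub 1%nat n). simpl in Hasub. lra. }
  assert (Hu : Un_cv (fun n => Hg mu g (join_part T P n) / INR n) (c * L)).
  2: { exists (c * L); split; auto. apply cv_limsup; auto. }
  intros eps Heps.
  set (e1 := eps / (3 * (a 1%nat + 1))).
  assert (He1 : 0 < e1). { unfold e1. pose proof (Hapos 1%nat). apply Rdiv_lt_0_compat; lra. }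
  destruct (f_bound g c HG Hc e1 He1) as [K [HK0 HK]].
  destruct (HL (eps / (3 * (Rabs c + 1)))) as [N1 HN1].
  { pose proof (Rabs_pos c). apply Rdiv_lt_0_compat; lra. }
  destruct (archimed_cor1 (eps / (3 * (K + 1)))) as [N2 [HN2 HN2']].
  { apply Rdiv_lt_0_compat; lra. }
  exists (max N1 N2). intros n Hn.
  assert (HnR : 0 < INR n) by (apply lt_0_INR; lia).
  assert (Dec : Hg mu g (join_part T P n) = c * a n + sumL (join_part T P n) (fun A => g (mu A) - c * eta (mu A))).
  { unfold a, Hg. change (fold_right Rplus 0 (map ?f ?l)) with (sumL l f).
    rewrite sumL_minus, sumL_scal. ring. }
  assert (Bf : Rabs (sumL (join_part T P n) (fun A => g (mu A) - c * eta (mu A))) <= e1 * a n + K).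
  { eapply Rle_trans; [apply sumL_abs|].
    eapply Rle_trans. apply (sumL_le _ _ (fun A => e1 * eta (mu A) + K * mu A)).
    intros B HB. apply HK. apply (good_mu01 S mu (join_part T P n)); auto.
    rewrite sumL_plus, !sumL_scal. rewrite (good_sum1 S mu); auto. right. unfold a, Hg. change (fold_right Rplus 0 (map ?f ?l)) with (sumL l f). ring. }
  specialize (HN1 n ltac:(lia)). unfold Rdist in *.
  replace (Hg mu g (join_part T P n) / INR n - c * L) with
    (c * (a n / INR n - L) + sumL (join_part T P n) (fun A => g (mu A) - c * eta (mu A)) / INR n)
    by (rewrite Dec; field; lra).
  eapply Rle_lt_trans; [apply Rabs_triang|]. rewrite Rabs_mult.
  assert (T1 : Rabs c * Rabs (a n / INR n - L) <= eps / 3).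
  { pose proof (Rabs_pos c). pose proof (Rabs_pos (a n / INR n - L)).
    assert (Rabs c * Rabs (a n / INR n - L) <= (Rabs c + 1) * (eps / (3 * (Rabs c + 1)))) by nra.
    replace ((Rabs c + 1) * (eps / (3 * (Rabs c + 1)))) with (eps / 3) in H1 by (field; lra). lra. }
  assert (T2 : Rabs (sumL (join_part T P n) (fun A => g (mu A) - c * eta (mu A)) / INR n) < 2 * eps / 3).
  { unfold Rdiv at 1. rewrite Rabs_mult, (Rabs_right (/ INR n)) by (left; apply Rinv_0_lt_compat; lra).
    assert (Rabs (sumL (join_part T P n) (fun A => g (mu A) - c * eta (mu A))) * / INR n <= (e1 * a n + K) * / INR n).
    { apply Rmult_le_compat_r; [left; apply Rinv_0_lt_compat; lra| auto]. }
    assert (e1 * a n * / INR n <= e1 * a 1%nat).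
    { replace (e1 * a n * / INR n) with (e1 * (a n / INR n)) by (field; lra). apply Rmult_le_compat_l; [lra|].
      apply Rmult_le_reg_r with (r := INR n); auto. replace (a n / INR n * INR n) with (a n) by (field; lra).
      rewrite Rmult_comm. apply Halin. }
    assert (e1 * a 1%nat < eps / 3).
    { unfold e1. pose proof (Hapos 1%nat).
      replace (eps / (3 * (a 1%nat + 1)) * a 1%nat) with ((eps / 3) * (a 1%nat / (a 1%nat + 1))) by (field; lra).
      assert (a 1%nat / (a 1%nat + 1) < 1). { apply Rmult_lt_reg_r with (r := a 1%nat + 1); [lra|].
        replace (a 1%nat / (a 1%nat + 1) * (a 1%nat + 1)) with (a 1%nat) by (field; lra). lra. }
      nra. }
    assert (K * / INR n < eps / 3).
    { assert (/ INR n <= / INR N2). { apply Rinv_le_contravar. apply lt_0_INR; lia. apply le_INR; lia. }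
      assert (H4 : K * / INR n <= K * (eps / (3 * (K + 1)))) by (apply Rmult_le_compat_l; lra).
      replace (K * (eps / (3 * (K + 1)))) with ((eps / 3) * (K / (K + 1))) in H4 by (field; lra).
      assert (K / (K + 1) < 1). { apply Rmult_lt_reg_r with (r := K + 1); [lra|].
        replace (K / (K + 1) * (K + 1)) with K by (field; lra). lra. }
      nra. }
    replace ((e1 * a n + K) * / INR n) with (e1 * a n * / INR n + K * / INR n) in H by ring. lra. }
  lra.
Qed.
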